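(* Let $P\subset\mathbb R^d$ be a $d$-polytope in general position, and let $P=P_1\cup\dots\cup P_k$ be a triangulation of $P$ into $d$-simplices whose vertices are all vertices of $P$ (the $P_i$ having pairwise intersections contained in their boundaries). Then for every $x\in\mathbb R^d$, $\mathbf 1_{\Omega(P)}(x)=\sum_{i=1}^k\mathbf 1_{\Omega(P_i)}(x)$. In particular $|\mathcal L(\Omega(P))|=\sum_{i=1}^k|\mathcal L(\Omega(P_i))|$.
   Context: For $k\ge1$, $\pi:\mathbb R^k\to\mathbb R^{k-1}$ forgets the last coordinate and $\pi^{(j)}$ forgets the last $j$ coordinates. For a compact $S\subset\mathbb R^k$ and $y\in\pi(S)$, $n(y,S)$ is the point of $S\cap\pi^{-1}(y)$ with smallest last coordinate, $NB(S)=\{n(y,S):y\in\pi(S)\}$, and $\Omega(S)=S\setminus NB(S)$; $\mathcal L(S)=S\cap\mathbb Z^k$; $\mathbf 1_A$ is the indicator function. A $d$-polytope $P$ with vertex set $V$ is in general position if for every $0\le k\le d-1$ and every $(k+1)$-subset $U\subset V$, $\pi^{(d-k)}(\mathrm{conv}(U))$ is a $k$-simplex. *)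

(* Defs.v *)
From HB Require Import structures.
From mathcomp Require Import all_boot all_order all_algebra.
From mathcomp Require Import all_classical all_reals all_analysis.
From mathcomp Require Import finmap.
Set Implicit Arguments. Unset Strict Implicit. Unset Printing Implicit Defensive.
Import Order.TTheory GRing.Theory Num.Theory.
Import numFieldNormedType.Exports.
Local Open Scope classical_set_scope.
Local Open Scope ring_scope.

Section Defs.
Variable R : realType.

Definition conv_seq m (s : seq 'rV[R]_m) : set 'rV[R]_m :=
  [set x | exists w : 'I_(size s) -> R,
     (forall i, 0 <= w i) /\ \sum_i w i = 1 /\
     x = \sum_i w i *: nth 0 s i].

Definition aff_indep m p (v : 'I_p -> 'rV[R]_m) : Prop :=
  forall c : 'I_p -> R, \sum_i c i = 0 -> \sum_i c i *: v i = 0 ->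
    forall i, c i = 0.

Definition is_simplex k (S : set 'rV[R]_k) : Prop :=
  exists v : 'I_k.+1 -> 'rV[R]_k,
    aff_indep v /\ S = conv_seq [seq v i | i <- enum 'I_k.+1].

(* Keep the first k coordinates of a point of R^d (for k <= d this is
   pi^(d-k), forgetting the last d-k coordinates). *)
Definition keep_first d k (x : 'rV[R]_d) : 'rV[R]_k :=
  \row_(i < k) (if (insub (val i) : option 'I_d) is Some j
                then x 0 j else 0).

Definition proj_last n (x : 'rV[R]_n.+1) : 'rV[R]_n :=
  \row_(i < n) x 0 (widen_ord (leqnSn n) i).

Definition last_coord n (x : 'rV[R]_n.+1) : R := x 0 ord_max.

Definition NB n (S : set 'rV[R]_n.+1) : set 'rV[R]_n.+1 :=
  [set x | S x /\ forall z, S z -> proj_last z = proj_last x ->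
                            last_coord x <= last_coord z].

Definition Omega n (S : set 'rV[R]_n.+1) : set 'rV[R]_n.+1 := S `\` NB S.

(* Lattice points L(S) = S ∩ Z^m, indexed by integer vectors. *)
Definition lattice m (S : set 'rV[R]_m) : set 'rV[int]_m :=
  [set z | S (map_mx (fun a : int => a%:~R) z)].

Definition boundary m (S : set 'rV[R]_m) : set 'rV[R]_m :=
  closure S `\` interior S.

Definition vertex_set m (V : seq 'rV[R]_m) : Prop :=
  uniq V /\ forall v, v \in V -> ~ conv_seq (rem v V) v.

Definition full_dim m (V : seq 'rV[R]_m) : Prop :=
  exists p : 'I_m.+1 -> 'rV[R]_m, (forall i, p i \in V) /\ aff_indep p.

Definition general_position d (V : seq 'rV[R]_d) : Prop :=
  forall k, (k < d)%N -> forall U : seq 'rV[R]_d,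
    uniq U -> size U = k.+1 -> {subset U <= V} ->
    is_simplex (keep_first k @` conv_seq U).

End Defs.

(* Main.v *)
Require Import Defs.
From HB Require Import structures.
From mathcomp Require Import all_boot all_order all_algebra.
From mathcomp Require Import all_classical all_reals all_analysis.
From mathcomp Require Import finmap.
From mathcomp Require Import ring lra zify.
Import Order.TTheory GRing.Theory Num.Theory.
Import numFieldNormedType.Exports.
Local Open Scope classical_set_scope.
Local Open Scope ring_scope.
Set Implicit Arguments. Unset Strict Implicit. Unset Printing Implicit Defensive.

Section Aux.
Variable R : realType.

Definition convF m p (v : 'I_p -> 'rV[R]_m) : set 'rV[R]_m :=
  [set x | exists w : 'I_p -> R,
     (forall i, 0 <= w i) /\ \sum_i w i = 1 /\ x = \sum_i w i *: v i].

Lemma convF_cast m p q (e : p = q) (v : 'I_q -> 'rV[R]_m) :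
  convF (fun i : 'I_p => v (cast_ord e i)) = convF v.
Proof. by subst; congr convF; apply: funext => i; rewrite cast_ord_id. Qed.

Lemma conv_mapE m p (v : 'I_p -> 'rV[R]_m) :
  conv_seq [seq v i | i <- enum 'I_p] = convF v.
Proof.
have e : size [seq v i | i <- enum 'I_p] = p by rewrite size_map size_enum_ord.
rewrite -(convF_cast e); congr convF; apply: funext => i.
rewrite (nth_map (cast_ord e i)); last by rewrite (leq_trans (ltn_ord i)) // size_map.
by congr v; apply: (nth_ord_enum (cast_ord e i) (cast_ord e i)).
Qed.

Lemma convF_convex m p (v : 'I_p -> 'rV[R]_m) x y (t : R) :
  convF v x -> convF v y -> 0 <= t <= 1 -> convF v ((1 - t) *: x + t *: y).
Proof.
move=> [a [a0 [a1 ->]]] [b [b0 [b1 ->]]] /andP[t0 t1].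
rewrite /convF /=; exists (fun i => (1 - t) * a i + t * b i); split.
  by move=> i; rewrite addr_ge0 // mulr_ge0 // subr_ge0.
split; first by rewrite big_split /= -!mulr_sumr a1 b1 !mulr1 subrK.
rewrite !scaler_sumr -big_split /=; apply: eq_bigr => i _.
by rewrite !scalerA scalerDl.
Qed.

Lemma convF_vertex m p (v : 'I_p -> 'rV[R]_m) i : convF v (v i).
Proof.
rewrite /convF /=; exists (fun j => (j == i)%:R); split; first by move=> j; rewrite ler0n.
split.
  by rewrite (bigD1 i) //= eqxx big1 ?addr0 // => j /negbTE ->.
by rewrite (bigD1 i) //= eqxx scale1r big1 ?addr0 // => j /negbTE ->; rewrite scale0r.
Qed.

Definition aug m (y : 'rV[R]_m) : 'rV[R]_m.+1 :=
  \row_j (if unlift ord_max j is Some j' then y 0 j' else 1).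
Definition augM m p (r : 'I_p -> 'rV[R]_m) : 'M[R]_(p, m.+1) :=
  \matrix_(l, j) aug (r l) 0 j.

Lemma aug_sum m p (r : 'I_p -> 'rV[R]_m) (c : 'I_p -> R) :
  (\row_l c l) *m augM r =
  \row_j (if unlift ord_max j is Some j' then (\sum_l c l *: r l) 0 j'
          else \sum_l c l).
Proof.
apply/rowP => j; rewrite !mxE; case: unliftP => [j'|] -> /=.
  by rewrite summxE; apply: eq_bigr => l _; rewrite !mxE liftK.
by apply: eq_bigr => l _; rewrite !mxE unlift_none mulr1.
Qed.

Lemma aug_comb m p (r : 'I_p -> 'rV[R]_m) (c : 'I_p -> R) :
  \sum_l c l = 1 -> (\row_l c l) *m augM r = aug (\sum_l c l *: r l).
Proof.
move=> c1; rewrite aug_sum; apply/rowP => j; rewrite !mxE.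
by case: unliftP => [j'|] _ //.
Qed.

Lemma aug_zero m p (r : 'I_p -> 'rV[R]_m) (c : 'I_p -> R) :
  (\row_l c l) *m augM r = 0 <-> (\sum_l c l *: r l = 0 /\ \sum_l c l = 0).
Proof.
rewrite aug_sum; split.
  move=> /rowP H; split; last by have := H ord_max; rewrite !mxE unlift_none.
  apply/rowP => j; have := H (lift ord_max j); by rewrite !mxE liftK.
move=> [/rowP H1 H2]; apply/rowP => j; rewrite !mxE.
by case: unliftP => [j'|] _ //; have := H1 j'; rewrite !mxE.
Qed.

Lemma row_eta p (v : 'rV[R]_p) : v = \row_l v 0 l.
Proof. by apply/rowP => l; rewrite mxE. Qed.

Lemma aff_indep_unit m (r : 'I_m.+1 -> 'rV[R]_m) :
  aff_indep r <-> augM r \in unitmx.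
Proof.
split.
  move=> H; rewrite unitmxE unitfE; apply/negP => /det0P [v vn0 vA].
  move: vA; rewrite [v]row_eta => /aug_zero [h1 h2].
  have := H _ h2 h1 => h; move/eqP: vn0; apply; apply/rowP => l.
  by rewrite !mxE h.
move=> U c h2 h1 i.
have : (\row_l c l) *m augM r = 0 by apply/aug_zero.
move=> /(congr1 (mulmx ^~ (invmx (augM r)))); rewrite mulmxK // mul0mx.
by move/rowP/(_ i); rewrite !mxE.
Qed.

Definition evalf m (v : 'rV[R]_m.+1) (y : 'rV[R]_m) : R := (aug y *m v^T) 0 0.

Lemma evalf_comb m p (r : 'I_p -> 'rV[R]_m) (c : 'I_p -> R) v :
  \sum_l c l = 1 -> evalf v (\sum_l c l *: r l) = \sum_l c l * evalf v (r l).
Proof.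
move=> c1; rewrite /evalf -aug_comb // -mulmxA mxE; apply: eq_bigr => l _.
rewrite mxE; congr (_ * _); rewrite !mxE; apply: eq_bigr => j _; by rewrite !mxE.
Qed.

Lemma augM_evalf m p (r : 'I_p -> 'rV[R]_m) v l :
  (augM r *m v^T) l 0 = evalf v (r l).
Proof. by rewrite /evalf !mxE; apply: eq_bigr => j _; rewrite !mxE. Qed.

Lemma not_indep_ker m (r : 'I_m.+1 -> 'rV[R]_m) :
  ~ aff_indep r -> exists2 v : 'rV[R]_m.+1, v != 0 & forall l, evalf v (r l) = 0.
Proof.
rewrite aff_indep_unit unitmxE unitfE -det_tr => /negP; rewrite negbK.
move=> /det0P [v vn0 vA]; exists v => // l.
rewrite -augM_evalf -[augM r *m _]trmxK trmx_mul trmxK vA.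
by rewrite !mxE.
Qed.

Lemma ker_not_indep m (r : 'I_m.+1 -> 'rV[R]_m) v :
  v != 0 -> (forall l, evalf v (r l) = 0) -> ~ aff_indep r.
Proof.
move=> vn0 H; rewrite aff_indep_unit => U.
have E : augM r *m v^T = 0.
  by apply/matrixP => l j; rewrite ord1 augM_evalf H mxE.
have : v^T = 0 by rewrite -(mulKmx U v^T) E mulmx0.
by move/(congr1 trmx); rewrite trmxK trmx0 => /eqP; rewrite (negbTE vn0).
Qed.

Lemma aff_indep_inj m p (r : 'I_p -> 'rV[R]_m) : aff_indep r -> injective r.
Proof.
move=> H a b e; apply/eqP/negP => /negP ab.
have := H (fun l => (l == a)%:R - (l == b)%:R).
have s1 : forall (F : 'I_p -> 'rV[R]_m), \sum_l (l == a)%:R *: F l = F a.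
  move=> F; rewrite (bigD1 a) //= eqxx scale1r big1 ?addr0 // => j /negbTE ->.
  by rewrite scale0r.
have s2 : forall x : 'I_p, \sum_l (((l == x)%:R) : R) = 1.
  by move=> x; rewrite (bigD1 x) //= eqxx big1 ?addr0 // => j /negbTE ->.
have s3 : forall (F : 'I_p -> 'rV[R]_m), \sum_l (l == b)%:R *: F l = F b.
  move=> F; rewrite (bigD1 b) //= eqxx scale1r big1 ?addr0 // => j /negbTE ->.
  by rewrite scale0r.
rewrite big_split /= sumrN !s2 subrr => /(_ erefl).
under eq_bigr do rewrite scalerBl.
rewrite big_split /= sumrN s1 s3 e subrr => /(_ erefl a).
by rewrite eqxx (negbTE ab) subr0 => /eqP; rewrite oner_eq0.
Qed.


Lemma cont_sum m (I : Type) (s : seq I) (g : I -> 'rV[R]_m -> R) :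
  (forall i, continuous (g i)) -> continuous (fun y => \sum_(i <- s) g i y).
Proof.
move=> H; elim: s => [|a s IH].
  under eq_fun do rewrite big_nil; exact: cst_continuous.
under eq_fun do rewrite big_cons.
move=> x; apply: (cvgD (H a x) (IH x)).
Qed.

Section Bary.
Variables (m : nat) (r : 'I_m.+1 -> 'rV[R]_m).
Hypothesis Hr : aff_indep r.

Definition lam (y : 'rV[R]_m) : 'rV[R]_m.+1 := aug y *m invmx (augM r).

Let U : augM r \in unitmx. Proof. exact/aff_indep_unit. Qed.

Lemma lam_spec y : \sum_l lam y 0 l = 1 /\ \sum_l lam y 0 l *: r l = y.
Proof.
have K := mulmxKV U (aug y); rewrite -/(lam y) [lam y]row_eta aug_sum in K.
move/rowP: K => H; split.
  by have := H ord_max; rewrite !mxE unlift_none.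
by apply/rowP => j; have := H (lift ord_max j); rewrite !mxE liftK.
Qed.

Lemma lam_comb (w : 'I_m.+1 -> R) :
  \sum_l w l = 1 -> lam (\sum_l w l *: r l) = \row_l w l.
Proof. by move=> w1; rewrite /lam -aug_comb // mulmxK. Qed.

Lemma convF_lam y : convF r y <-> forall l, 0 <= lam y 0 l.
Proof.
split.
  move=> [w [w0 [w1 ->]]] l; by rewrite lam_comb // mxE.
move=> H; have [s1 s2] := lam_spec y.
by exists (fun l => lam y 0 l); split.
Qed.

Lemma aug_aff (y z : 'rV[R]_m) (t : R) :
  aug ((1 - t) *: y + t *: z) = (1 - t) *: aug y + t *: aug z.
Proof.
apply/rowP => j; rewrite !mxE; case: unliftP => [j'|] _; first by rewrite !mxE.
by rewrite !mulr1 subrK.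
Qed.

Lemma lam_aff y z (t : R) :
  lam ((1 - t) *: y + t *: z) = (1 - t) *: lam y + t *: lam z.
Proof. by rewrite /lam aug_aff mulmxDl -!scalemxAl. Qed.

Lemma lam_cont l : continuous (fun y => lam y 0 l).
Proof.
have E : (fun y => lam y 0 l) =
  (fun y => \sum_(j <- index_enum 'I_m.+1)
     ((if unlift ord_max j is Some j' then y 0 j' else 1) * invmx (augM r) j l)).
  by apply: funext => y; rewrite /lam mxE; apply: eq_bigr => j _; rewrite !mxE.
rewrite E; apply: cont_sum => j x.
apply: cvgMl; case: (unliftP ord_max j) => [j'|] _; last first. exact: (@cst_continuous _ R^o 1 x). exact: coord_continuous.
all: exact: nbhs_filter.
Qed.

Lemma interior_lam y : (forall l, 0 < lam y 0 l) -> interior (convF r) y.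
Proof.
move=> H; rewrite /interior /=.
have : \forall z \near y, forall l, 0 < lam z 0 l.
  apply: (@filter_forall _ _ (fun l z => 0 < lam z 0 l) (nbhs y) (nbhs_filter y)) => l.
  have hc : (fun z => lam z 0 l) @ y --> lam y 0 l by apply: lam_cont.
  exact: (@cvgr_gt _ _ (nbhs y) (nbhs_filter y) (fun z => lam z 0 l) (lam y 0 l) hc 0 (H l)).
apply: filterS => z Hz; apply/convF_lam => l; exact/ltW.
Qed.


Lemma face_mem y l : convF r y -> lam y 0 l = 0 ->
  convF (fun j : 'I_m => r (lift l j)) y.
Proof.
move=> /convF_lam H0 H1; have [s1 s2] := lam_spec y.
exists (fun j => lam y 0 (lift l j)); split; first by move=> j; apply: H0.
rewrite (bigD1_ord l) //= H1 add0r in s1; split => //.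
by rewrite (bigD1_ord l) //= H1 scale0r add0r in s2.
Qed.

End Bary.

Section Proj.
Variable n : nat.

Lemma keep_proj (x : 'rV[R]_n.+1) : keep_first n x = proj_last x.
Proof.
apply/rowP => i; rewrite !mxE.
have Hi : (val i < n.+1)%N by exact: (ltn_trans (ltn_ord i) (ltnSn n)).
by rewrite insubT /=; congr (x 0 _); apply: val_inj.
Qed.

Lemma proj_last_sum p (c : 'I_p -> R) (v : 'I_p -> 'rV[R]_n.+1) :
  proj_last (\sum_l c l *: v l) = \sum_l c l *: proj_last (v l).
Proof.
apply/rowP => i; rewrite mxE !summxE; apply: eq_bigr => l _; by rewrite !mxE.
Qed.

Lemma proj_last_aff (x z : 'rV[R]_n.+1) (t : R) :
  proj_last ((1 - t) *: x + t *: z) = (1 - t) *: proj_last x + t *: proj_last z.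
Proof. by apply/rowP => i; rewrite !mxE. Qed.

Lemma last_aff (x z : 'rV[R]_n.+1) (t : R) :
  last_coord ((1 - t) *: x + t *: z) = (1 - t) * last_coord x + t * last_coord z.
Proof. by rewrite /last_coord !mxE. Qed.

Lemma proj_last_inj (x z : 'rV[R]_n.+1) :
  proj_last x = proj_last z -> last_coord x = last_coord z -> x = z.
Proof.
move=> /rowP H1 H2; apply/rowP => j; case: (unliftP ord_max j) => [j'|] ->.
  have E : lift ord_max j' = widen_ord (leqnSn n) j'.
    by apply: val_inj => /=; rewrite /bump leqNgt ltn_ord.
  by have := H1 j'; rewrite !mxE E.
by move: H2; rewrite /last_coord.
Qed.

End Proj.

Lemma gp_contra n (V : seq 'rV[R]_n.+1) (U : 'I_n.+1 -> 'rV[R]_n.+1) :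
  general_position V -> injective U -> (forall j, U j \in V) ->
  forall x u, convF U x -> convF U u -> proj_last x = proj_last u -> x = u.
Proof.
move=> HV Uinj UV x u [a [a0 [a1 ax]]] [b [b0 [b1 bu]]] pxu.
have := HV n (ltnSn n) [seq U j | j <- enum 'I_n.+1].
rewrite map_inj_uniq // enum_uniq size_map size_enum_ord => /(_ isT erefl).
have sub : {subset [seq U j | j <- enum 'I_n.+1] <= V}.
  by move=> y /mapP [j _ ->].
move=> /(_ sub) [w [wi wE]]; rewrite conv_mapE conv_mapE in wE.
apply: contrapT => xu.
pose q j := proj_last (U j).
have nq : ~ aff_indep q.
  move=> Hq; apply: xu; rewrite ax bu.
  have := Hq (fun j => a j - b j).
  rewrite big_split /= sumrN a1 b1 subrr => /(_ erefl).
  have E : \sum_i (a i - b i) *: q i = 0.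
    under eq_bigr do rewrite scalerBl.
    by rewrite big_split /= sumrN -!proj_last_sum -ax -bu pxu subrr.
  move=> /(_ E) H; apply: eq_bigr => j _; congr (_ *: _).
  by apply/eqP; rewrite -subr_eq0; apply/eqP.
have [v vn0 Hv] := not_indep_ker nq.
apply: (ker_not_indep vn0 _ wi) => l.
have : (keep_first n @` convF U) (w l) by rewrite wE; apply: convF_vertex.
move=> [p [e [e0 [e1 ->]]] <-].
by rewrite keep_proj proj_last_sum evalf_comb // big1 // => j _; rewrite Hv mulr0.
Qed.


Lemma aux_ineq (g h a t : R) : g < 0 -> h <= a -> 0 < t ->
  t * (2 * (a - g)) <= - g -> (1 - t) * g + t * h < 0.
Proof. move=> *; nra. Qed.

Lemma common_eps (I : eqType) (s : seq I) (Q : I -> R -> Prop) :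
  (forall i, exists2 e, 0 < e & forall t, 0 < t <= e -> Q i t) ->
  exists2 e, 0 < e & forall t, 0 < t <= e -> forall i, i \in s -> Q i t.
Proof.
move=> H; elim: s => [|a s [e e0 He]]; first by exists 1 => //.
have [ea ea0 Ha] := H a.
exists (Num.min e ea); first by rewrite lt_min e0 ea0.
move=> t /andP[t0]; rewrite le_min => /andP[te tea] i; rewrite inE => /orP[/eqP ->|iS].
  by apply: Ha; rewrite t0.
by apply: He => //; rewrite t0.
Qed.

Lemma omega_below n (S : set 'rV[R]_n.+1) x : Omega S x ->
  S x /\ exists z, S z /\ proj_last z = proj_last x /\ last_coord z < last_coord x.
Proof.
move=> [Sx nNB]; split => //; apply: contrapT => H; apply: nNB; split => // z Sz pz.
rewrite leNgt; apply/negP => lt; apply: H; by exists z.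
Qed.

Lemma key n (V : seq 'rV[R]_n.+1) k (T : 'I_k -> 'I_n.+2 -> 'rV[R]_n.+1) :
  general_position V -> (forall i j, T i j \in V) -> (forall i, aff_indep (T i)) ->
  conv_seq V = \bigcup_(i in [set: 'I_k]) convF (T i) ->
  (forall i j : 'I_k, i != j ->
     convF (T i) `&` convF (T j) `<=` boundary (convF (T i)) `&` boundary (convF (T j))) ->
  forall x, \1_(Omega (conv_seq V)) x = \sum_(i < k) \1_(Omega (convF (T i))) x :> R.
Proof.
move=> HV TV Tind Hcov Hbd x.
have sub i : convF (T i) `<=` conv_seq V by rewrite Hcov => y Hy; exists i.
case: (pselect (Omega (conv_seq V) x)) => HO; last first.
  rewrite indicE memNset // big1 // => i _; rewrite indicE memNset //.
  move=> /omega_below [Pix [z [Piz [pz lz]]]]; apply: HO; split; first exact: (sub i).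
  move=> [_ H]; have := H z (sub i z Piz) pz; by rewrite leNgt lz.
have uniq_i : forall i j, Omega (convF (T i)) x -> Omega (convF (T j)) x -> i = j.
  move=> i j /omega_below [Pix [zi [Pzi [pzi lzi]]]] /omega_below [Pjx [zj [Pzj [pzj lzj]]]].
  apply: contrapT => /eqP ij.
  set lx := last_coord x.
  set c := Num.max (last_coord zi) (last_coord zj).
  have clx : c < lx by rewrite gt_max lzi lzj.
  have mk : forall zz, last_coord zz < lx -> last_coord zz <= c ->
     exists2 tt : R, 0 <= tt <= 1 &
       last_coord ((1 - tt) *: x + tt *: zz) = c.
    move=> zz lz lzc; exists ((lx - c) / (lx - last_coord zz)).
      have d0 : 0 < lx - last_coord zz by rewrite subr_gt0.
      apply/andP; split; first by rewrite divr_ge0 // subr_ge0 ltW.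
      by rewrite ler_pdivrMr // mul1r lerD2l lerN2.
    rewrite last_aff -/lx; have d0 : lx - last_coord zz != 0.
      by rewrite subr_eq0 gt_eqF.
    by field.
  have [ti ti01 lui] := mk zi lzi (ltac:(by rewrite le_max lexx)).
  have [tj tj01 luj] := mk zj lzj (ltac:(by rewrite le_max lexx orbT)).
  set u := (1 - ti) *: x + ti *: zi.
  have Piu : convF (T i) u by apply: convF_convex.
  have Pju : convF (T j) u.
    have -> : u = (1 - tj) *: x + tj *: zj.
      apply: proj_last_inj; last by rewrite lui luj.
      by rewrite /u !proj_last_aff pzi pzj -!scalerDl !subrK.
    exact: convF_convex.
  have h01 : (0 <= (1 / 2 : R) <= 1) by apply/andP; split; lra.
  set mm := (1 - 1 / 2) *: x + (1 / 2) *: u.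
  have [Bi _] := Hbd i j ij mm (conj (convF_convex Pix Piu h01) (convF_convex Pjx Pju h01)).
  case: Bi => _; apply.
  apply: interior_lam => //; apply: contrapT => /existsNP [l].
  move/negP; rewrite -leNgt => hl.
  have hx := (proj1 (convF_lam (Tind i) x) Pix) l.
  have hu := (proj1 (convF_lam (Tind i) u) Piu) l.
  rewrite /mm lam_aff // in hl.
  have [lx0 lu0] : lam (T i) x 0 l = 0 /\ lam (T i) u 0 l = 0.
    move: hx hu hl; move: (lam (T i) x) (lam (T i) u) => a b hx hu hl.
    rewrite !mxE in hl; split; lra.
  have Fx := face_mem (Tind i) Pix lx0.
  have Fu := face_mem (Tind i) Piu lu0.
  have xu : x = u.
    apply: (gp_contra HV _ _ Fx Fu).
    - by move=> a b /(aff_indep_inj (Tind i)) /lift_inj.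
    - by move=> a; apply: TV.
    by rewrite /u proj_last_aff pzi -scalerDl subrK scale1r.
  by move: clx; rewrite -lui -/u -xu -/lx ltxx.
have [Px [z [Pz [pz lz]]]] := omega_below HO.
have Hq : forall i, exists2 e : R, 0 < e & forall t, 0 < t <= e ->
   convF (T i) x \/ ~ convF (T i) ((1 - t) *: x + t *: z).
  move=> i; case: (pselect (convF (T i) x)) => hx.
    by exists 1 => // t _; left.
  have [l hl] : exists l, lam (T i) x 0 l < 0.
    apply: contrapT => H; apply: hx; apply/(convF_lam (Tind i)) => l.
    rewrite leNgt; apply/negP => H'; apply: H; by exists l.
  set g := lam (T i) x 0 l; set h := lam (T i) z 0 l.
  have d0 : 0 < 2 * (`|h| - g).
    by rewrite mulr_gt0 // subr_gt0 (lt_le_trans hl).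
  exists (- g / (2 * (`|h| - g))); first by rewrite divr_gt0 // oppr_gt0.
  move=> t /andP[t0]; rewrite ler_pdivlMr // => te; right.
  move/(convF_lam (Tind i))/(_ l); rewrite lam_aff // => H.
  have {}H : 0 <= (1 - t) * g + t * h.
    by move: H; rewrite /g /h; move: (lam (T i) x) (lam (T i) z) => a b; rewrite !mxE.
  by have := aux_ineq hl (ler_norm h) t0 te; rewrite ltNge H.
have [e e0 He] := common_eps (enum 'I_k) Hq.
set t := Num.min e (1 / 2).
have t0 : 0 < t by rewrite lt_min e0 divr_gt0.
have te : t <= e by rewrite ge_min lexx.
have t1 : t <= 1 / 2 by rewrite ge_min lexx orbT.
set y := (1 - t) *: x + t *: z.
have Py : conv_seq V y.
  apply: (@convF_convex _ _ (fun i : 'I_(size V) => nth 0 V i)) => //.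
  rewrite ltW //= (le_trans t1) // ler_pdivrMr // mul1r ler1n //.
have Py' : (\bigcup_(i in [set: 'I_k]) convF (T i)) y by rewrite -Hcov.
case: Py' => i _ Piy.
have Pix : convF (T i) x.
  have := He t; rewrite t0 te => /(_ isT i (mem_enum _ i)) [//|].
  by move/(_ Piy).
have Oi : Omega (convF (T i)) x.
  split => // -[_ H]; have := H y Piy.
  rewrite proj_last_aff pz -scalerDl subrK scale1r => /(_ erefl).
  rewrite last_aff; apply/negP; rewrite -ltNge; nra.
rewrite indicE (mem_set HO) (bigD1 i) //= indicE (mem_set Oi) big1 ?addr0 // => j ji.
rewrite indicE memNset // => Oj; move: ji; by rewrite (uniq_i _ _ Oj Oi) eqxx.
Qed.


Lemma conv_bound m p (v : 'I_p -> 'rV[R]_m) :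
  exists M, forall x, convF v x -> forall j, `|x 0 j| <= M.
Proof.
exists (\sum_l \sum_j `|v l 0 j|) => x [w [w0 [w1 ->]]] j.
rewrite summxE (le_trans (ler_norm_sum _ _ _)) //; apply: ler_sum => l _.
rewrite mxE normrM (ger0_norm (w0 l)).
have wl1 : w l <= 1.
  by rewrite -w1 (bigD1 l) //= lerDl sumr_ge0.
apply: (le_trans (y := `|v l 0 j|)).
  by rewrite -[X in _ <= X]mul1r ler_wpM2r.
by rewrite (bigD1 j) //= lerDl sumr_ge0.
Qed.

Lemma lattice_finite m (S : set 'rV[R]_m) M :
  (forall x, S x -> forall j, `|x 0 j| <= M) -> finite_set (lattice S).
Proof.
move=> HM.
have [N MN] : exists N : nat, M < N%:R.
  exists (Num.Def.archi_bound (Num.max M 0)).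
  apply: (le_lt_trans _ (archi_boundP _)); first by rewrite le_max lexx.
  by rewrite le_max lexx orbT.
pose f (u : 'rV['I_(N.*2).+1]_m) : 'rV[int]_m := \row_j ((u 0 j : nat)%:Z - N%:Z).
apply: (sub_finite_set (B := f @` setT)); last exact: finite_image finite_finset.
move=> z Sz; exists (\row_j inord (absz (z 0 j + N%:Z))) => //.
apply/rowP => j; rewrite !mxE.
have hz : `|z 0 j| < N%:Z.
  have := HM _ Sz j; rewrite mxE => h.
  rewrite -(ltr_int R) intr_norm; exact: le_lt_trans h MN.
move: hz; rewrite ltr_norml => /andP[h1 h2].
have h3 : 0 <= z 0 j + N%:Z by lia.
rewrite inordK; first by rewrite gez0_abs // addrK.
by rewrite -ltz_nat gez0_abs //; lia.
Qed.


End Aux.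

Lemma card_sum (T : choiceType) k (A : set T) (B : 'I_k -> set T) :
  finite_set A ->
  (forall z, ((z \in A) : nat) = \sum_(i < k) ((z \in B i) : nat))%N ->
  #|` fset_set A| = (\sum_(i < k) #|` fset_set (B i)|)%N.
Proof.
move=> fA H.
have BA i : B i `<=` A.
  move=> z Bz; apply: set_mem; have := H z.
  rewrite (bigD1 i) //= (mem_set Bz).
  by case: (z \in A) => //; rewrite add1n.
have fB i : finite_set (B i) by apply: sub_finite_set (BA i) fA.
have E i : #|` fset_set (B i)| =
    (\sum_(z <- fset_set A) ((z \in B i) : nat))%N.
  rewrite card_fset_sum1 (eq_big_seq (fun z => ((z \in B i) : nat))).
    apply: big_fset_incl.
      by rewrite -fset_set_sub.
    by move=> z _; rewrite in_fset_set // => /negbTE ->.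
  by move=> z; rewrite in_fset_set // => ->.
under eq_bigr do rewrite E.
rewrite exchange_big /= card_fset_sum1; apply: eq_big_seq => z.
by rewrite in_fset_set // -H => ->.
Qed.

Lemma memlat (R : realType) m (S : set 'rV[R]_m) z :
  (z \in lattice S) = (map_mx (fun a : int => a%:~R) z \in S).
Proof. by apply/idP/idP => /set_mem H; apply: mem_set. Qed.

Theorem mainTheorem5 (R : realType) (n : nat) (V : seq 'rV[R]_n.+1)
  (k : nat) (T : 'I_k -> 'I_n.+2 -> 'rV[R]_n.+1) :
  vertex_set V -> full_dim V -> general_position V ->
  (forall i j, T i j \in V) ->
  (forall i, aff_indep (T i)) ->
  conv_seq V = \bigcup_(i in [set: 'I_k])
                 conv_seq [seq T i j | j <- enum 'I_n.+2] ->
  (forall i j : 'I_k, i != j ->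
     conv_seq [seq T i l | l <- enum 'I_n.+2] `&`
     conv_seq [seq T j l | l <- enum 'I_n.+2] `<=`
     boundary (conv_seq [seq T i l | l <- enum 'I_n.+2]) `&`
     boundary (conv_seq [seq T j l | l <- enum 'I_n.+2])) ->
  (forall x : 'rV[R]_n.+1,
     \1_(Omega (conv_seq V)) x =
     \sum_(i < k) \1_(Omega (conv_seq [seq T i l | l <- enum 'I_n.+2])) x :> R)
  /\ (finite_set (lattice (Omega (conv_seq V))) /\
      (forall i, finite_set
         (lattice (Omega (conv_seq [seq T i l | l <- enum 'I_n.+2])))) /\
      #|` fset_set (lattice (Omega (conv_seq V))) | =
      (\sum_(i < k) #|` fset_set
         (lattice (Omega (conv_seq [seq T i l | l <- enum 'I_n.+2]))) |)%N).
Proof.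
move=> HVs Hfd HV TV Tind Hcov Hbd.
have E i : conv_seq [seq T i l | l <- enum 'I_n.+2] = convF (T i) := conv_mapE (T i).
have Hcov' : conv_seq V = \bigcup_(i in [set: 'I_k]) convF (T i).
  by rewrite Hcov; apply: eq_bigcupr => i _; exact: E.
have Hbd' : forall i j : 'I_k, i != j ->
     convF (T i) `&` convF (T j) `<=` boundary (convF (T i)) `&` boundary (convF (T j)).
  by move=> i j ij; rewrite -!E; exact: Hbd.
have K := key HV TV Tind Hcov' Hbd'.
have K' : forall x : 'rV[R]_n.+1,
     \1_(Omega (conv_seq V)) x =
     \sum_(i < k) \1_(Omega (conv_seq [seq T i l | l <- enum 'I_n.+2])) x :> R.
  by move=> x; rewrite K; apply: eq_bigr => i _; rewrite E.
split => //.
have [M HM] := conv_bound (fun i : 'I_(size V) => nth 0 V i).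
have finP : finite_set (lattice (Omega (conv_seq V))).
  by apply: (lattice_finite (M := M)) => x [Px _]; exact: HM Px.
have finPi : forall i, finite_set
         (lattice (Omega (conv_seq [seq T i l | l <- enum 'I_n.+2]))).
  move=> i; rewrite E; apply: (lattice_finite (M := M)) => x [Px _].
  apply: (HM x); change (conv_seq V x); rewrite Hcov'; by exists i.
split => //; split => //.
apply: card_sum => // z.
have := K' (map_mx (fun a : int => a%:~R) z).
rewrite !indicE -natr_sum => /eqP; rewrite eqr_nat => /eqP ->.
by apply: eq_bigr => i _; rewrite memlat.
Qed.
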